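(* Let $L\ge1$, let $\gamma,\theta,\zeta,\mu_1,\dots,\mu_L$ be generic complex parameters, and consider the functions $M_\nu:\mathbb{C}^{L+1}\to\mathbb{C}$, $0\le\nu\le L$, $(\lambda_0,\boldsymbol\lambda)\mapsto M_\nu(\lambda_0;\boldsymbol\lambda)$ with $\boldsymbol\lambda=(\lambda_1,\dots,\lambda_L)$, defined in the context. Then: (1) $M_0(\lambda_0;\boldsymbol\lambda)$ is symmetric in $\lambda_1,\dots,\lambda_L$ and invariant under $\lambda_j\mapsto-\lambda_j-\gamma$ for each $1\le j\le L$; (2) for each $1\le i\le L$, $M_i(\lambda_0;\boldsymbol\lambda)$ is symmetric in the variables $\lambda_j$, $j\in\{1,\dots,L\}\setminus\{i\}$, and invariant under $\lambda_j\mapsto-\lambda_j-\gamma$ for each $j\in\{1,\dots,L\}\setminus\{i\}$; (3) for $1\le i,j\le L$, $M_i(\lambda_0;\boldsymbol\lambda)|_{\lambda_i\leftrightarrow\lambda_j}=M_j(\lambda_0;\boldsymbol\lambda)$, and \[ M_i(\lambda_0;\boldsymbol\lambda)\big|_{\lambda_i\mapsto-\lambda_i-\gamma}=-\frac{[2\lambda_i+2\gamma,\,\theta+\zeta+\lambda_i]}{[2\lambda_i,\,\theta+\zeta-\lambda_i-\gamma]}\,M_i(\lambda_0;\boldsymbol\lambda). \]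
   Context: Fix $\tau\in\mathbb{C}$ with $\operatorname{Im}\tau>0$, let $f(\lambda)=\sum_{n\ge0}(-1)^n e^{\mathrm{i}n(n+1)\pi\tau}\sinh((2n+1)\lambda)$, and write $[x]:=f(x)$, $[x_1,\dots,x_k]:=f(x_1)\cdots f(x_k)$. Define $\Lambda_{\mathcal A}(\lambda)=[\zeta+\lambda]\frac{[\theta+\zeta-\lambda]}{[\theta+\zeta+\lambda]}\prod_{j=1}^L[\lambda-\mu_j+\gamma,\lambda+\mu_j+\gamma]$, $\Lambda_{\tilde{\mathcal D}}(\lambda)=[\zeta-\lambda-\gamma]\frac{[2\lambda,\theta+\zeta+\lambda+\gamma,\theta-L\gamma]}{[2\lambda+\gamma,\theta+\zeta+\lambda,\theta-(L-1)\gamma]}\prod_{j=1}^L[\lambda-\mu_j,\lambda+\mu_j]$, $\bar\Lambda_{\mathcal A}(\lambda)=[\zeta-\lambda]\frac{[\gamma,\theta+(L-1)\gamma-2\lambda]}{[2\lambda+\gamma,\theta+(L-1)\gamma]}\prod_{j=1}^L[\lambda-\mu_j+\gamma,\lambda+\mu_j+\gamma]+[\zeta+\lambda+\gamma]\frac{[2\lambda,\theta+\zeta-\lambda-\gamma,\theta+L\gamma]}{[2\lambda+\gamma,\theta+\zeta+\lambda,\theta+(L-1)\gamma]}\prod_{j=1}^L[\lambda-\mu_j,\lambda+\mu_j]$. Then $M_0(\lambda_0;\boldsymbol\lambda)=\bar\Lambda_{\mathcal A}(\lambda_0)-\Lambda_{\mathcal A}(\lambda_0)\prod_{j=1}^L\frac{[\lambda_j-\lambda_0+\gamma,\lambda_j+\lambda_0]}{[\lambda_j-\lambda_0,\lambda_j+\lambda_0+\gamma]}$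 and, for $1\le i\le L$, $M_i(\lambda_0;\boldsymbol\lambda)=\frac{[2\lambda_i,\gamma,\theta+(L-1)\gamma+\lambda_i-\lambda_0]}{[2\lambda_i+\gamma,\lambda_i-\lambda_0,\theta+(L-1)\gamma]}\Lambda_{\mathcal A}(\lambda_i)\prod_{j\ne i}\frac{[\lambda_j-\lambda_i+\gamma,\lambda_j+\lambda_i]}{[\lambda_j-\lambda_i,\lambda_j+\lambda_i+\gamma]}+\frac{[\gamma,\theta+(L-2)\gamma-\lambda_i-\lambda_0,\theta-(L-1)\gamma]}{[\lambda_i+\lambda_0+\gamma,\theta+(L-1)\gamma,\theta-L\gamma]}\Lambda_{\tilde{\mathcal D}}(\lambda_i)\prod_{j\ne i}\frac{[\lambda_i-\lambda_j+\gamma,\lambda_i+\lambda_j+2\gamma]}{[\lambda_i-\lambda_j,\lambda_i+\lambda_j+\gamma]}$, products over $j\in\{1,\dots,L\}$. *)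

(* Defs.v *)
From Stdlib Require Import Reals.
From Coquelicot Require Import Coquelicot.
Open Scope C_scope.

Definition Cexp (z : C) : C :=
  (exp (Re z) * cos (Im z), exp (Re z) * sin (Im z))%R.

Definition Csinh (z : C) : C := (Cexp z - Cexp (- z)) / 2.

Definition fterm (tau x : C) (n : nat) : C :=
  (-1) ^ n * Cexp (Ci * PI * tau * INR (n * (n + 1)))
    * Csinh (INR (2 * n + 1) * x).

(* f(x) := the sum of the (convergent, since Im tau > 0) series. *)
Definition fth (tau x : C) : C :=
  @iota C_CompleteNormedModule (fun l : C => is_series (fterm tau x) l).

Fixpoint Cprod (n : nat) (F : nat -> C) : C :=
  match n with
  | O => 1
  | S m => Cprod m F * F (S m)
  end.

Definition Cprod_ne (n i : nat) (F : nat -> C) : C :=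
  Cprod n (fun j => if Nat.eqb j i then 1 else F j).

Definition LamA (tau gam th ze : C) (L : nat) (mu : nat -> C) (x : C) : C :=
  let f := fth tau in
  f (ze + x) * f (th + ze - x) / f (th + ze + x)
  * Cprod L (fun j => f (x - mu j + gam) * f (x + mu j + gam)).

Definition LamDt (tau gam th ze : C) (L : nat) (mu : nat -> C) (x : C) : C :=
  let f := fth tau in
  f (ze - x - gam)
  * (f (2 * x) * f (th + ze + x + gam) * f (th - INR L * gam))
  / (f (2 * x + gam) * f (th + ze + x) * f (th - (INR L - 1) * gam))
  * Cprod L (fun j => f (x - mu j) * f (x + mu j)).

Definition LamAbar (tau gam th ze : C) (L : nat) (mu : nat -> C) (x : C) : C :=
  let f := fth tau in
  f (ze - x)
  * (f gam * f (th + (INR L - 1) * gam - 2 * x))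
  / (f (2 * x + gam) * f (th + (INR L - 1) * gam))
  * Cprod L (fun j => f (x - mu j + gam) * f (x + mu j + gam))
  + f (ze + x + gam)
  * (f (2 * x) * f (th + ze - x - gam) * f (th + INR L * gam))
  / (f (2 * x + gam) * f (th + ze + x) * f (th + (INR L - 1) * gam))
  * Cprod L (fun j => f (x - mu j) * f (x + mu j)).

(* M_nu(lam0; lam_1..lam_L), nu in {0..L}; lam j is lambda_j for 1 <= j <= L *)
Definition Mfun (tau gam th ze : C) (L : nat) (mu : nat -> C)
    (nu : nat) (lam0 : C) (lam : nat -> C) : C :=
  let f := fth tau in
  match nu with
  | O =>
      LamAbar tau gam th ze L mu lam0
      - LamA tau gam th ze L mu lam0
        * Cprod L (fun j => f (lam j - lam0 + gam) * f (lam j + lam0)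
                             / (f (lam j - lam0) * f (lam j + lam0 + gam)))
  | S _ =>
      let li := lam nu in
      (f (2 * li) * f gam * f (th + (INR L - 1) * gam + li - lam0))
      / (f (2 * li + gam) * f (li - lam0) * f (th + (INR L - 1) * gam))
      * LamA tau gam th ze L mu li
      * Cprod_ne L nu (fun j => f (lam j - li + gam) * f (lam j + li)
                                 / (f (lam j - li) * f (lam j + li + gam)))
      + (f gam * f (th + (INR L - 2) * gam - li - lam0) * f (th - (INR L - 1) * gam))
      / (f (li + lam0 + gam) * f (th + (INR L - 1) * gam) * f (th - INR L * gam))
      * LamDt tau gam th ze L mu li
      * Cprod_ne L nu (fun j => f (li - lam j + gam) * f (li + lam j + 2 * gam)
                                 / (f (li - lam j) * f (li + lam j + gam)))
  end.

Definition refl_at (gam : C) (j : nat) (lam : nat -> C) : nat -> C :=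
  fun k => if Nat.eqb k j then - lam k - gam else lam k.

Definition swap_at (i j : nat) (lam : nat -> C) : nat -> C :=
  fun k => if Nat.eqb k i then lam j else if Nat.eqb k j then lam i else lam k.

(* sigma restricts to a permutation of {1..L} (injective self-map of a finite set) *)
Definition perm_1L (L : nat) (sigma : nat -> nat) : Prop :=
  (forall j, (1 <= j <= L)%nat -> (1 <= sigma j <= L)%nat) /\
  (forall j k, (1 <= j <= L)%nat -> (1 <= k <= L)%nat -> sigma j = sigma k -> j = k).

(* Genericity: all theta-values that can occur in denominators (of M_nu and of
   their images under the transformations considered) are nonzero.
   Index 0 stands for lambda_0. *)
Definition generic (tau gam th ze : C) (L : nat) (lam0 : C) (lam : nat -> C) : Prop :=
  let f := fth tau in
  let l := fun a : nat => match a with O => lam0 | S _ => lam a end in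
  f (th + (INR L - 1) * gam) <> 0 /\
  f (th - (INR L - 1) * gam) <> 0 /\
  f (th - INR L * gam) <> 0 /\
  (forall a, (a <= L)%nat ->
     f (2 * l a) <> 0 /\ f (2 * l a + gam) <> 0 /\
     f (th + ze + l a) <> 0 /\ f (th + ze - l a - gam) <> 0) /\
  (forall a b, (a <= L)%nat -> (b <= L)%nat -> a <> b ->
     f (l a - l b) <> 0 /\ f (l a + l b + gam) <> 0).

(* Main.v *)
Require Import Defs.
From Stdlib Require Import Reals List Permutation Lia Lra Classical FunctionalExtensionality PropExtensionality.
From Coquelicot Require Import Coquelicot.
Open Scope C_scope.

Lemma Cinv0 : Cinv 0 = 0.
Proof. unfold Cinv; simpl. apply injective_projections; simpl; unfold Rdiv; ring. Qed.

Lemma Cinv_mul_gen (a b : C) : / (a * b) = / a * / b.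
Proof.
  destruct (classic (a = 0)) as [Ha|Ha].
  { subst. rewrite Cmult_0_l, Cinv0. ring. }
  destruct (classic (b = 0)) as [Hb|Hb].
  { subst. rewrite Cmult_0_r, Cinv0. ring. }
  field. split; auto.
Qed.

Lemma Cinv_opp_gen (a : C) : / (- a) = - / a.
Proof.
  destruct (classic (a = 0)) as [Ha|Ha].
  { subst. replace (-0) with (0:C) by ring. rewrite Cinv0. ring. }
  assert (Hn : - a <> 0). { intro H. apply Ha. replace a with (- - a) by ring. rewrite H. ring. }
  field. repeat split; auto.
Qed.

Lemma Csinh_opp (y : C) : Csinh (- y) = - Csinh y.
Proof. unfold Csinh. replace (- - y) with y by ring. unfold Cdiv. ring. Qed.

Lemma fterm_opp tau x n : fterm tau (- x) n = - fterm tau x n.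
Proof.
  unfold fterm. replace (RtoC (INR (2 * n + 1)) * - x) with (- (RtoC (INR (2 * n + 1)) * x)) by ring.
  rewrite Csinh_opp. ring.
Qed.

Lemma iota_empty (P : C -> Prop) : (forall l, ~ P l) -> @iota C_CompleteNormedModule P = (0:C).
Proof.
  intros HP. unfold iota, lim. simpl. unfold C_complete_lim, R_complete_lim.
  assert (Hlub : forall E : R -> Prop, (forall x, E x) -> real (Lub_Rbar E) = 0%R).
  { intros E HF. destruct (Lub_Rbar_correct E) as [Hub _].
    destruct (Lub_Rbar E) as [r| |] eqn:Er; simpl; auto.
    exfalso. specialize (Hub (r + 1)%R (HF _)). simpl in Hub. lra. }
  apply injective_projections; simpl.
  - apply Hlub. intros y x Hx. exfalso; eapply HP; eauto.
  - apply Hlub. intros y x Hx. exfalso; eapply HP; eauto.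
Qed.

Lemma Copp2 (z : C) : - - z = z. Proof. ring. Qed.

Lemma is_series_C_unique (a : nat -> C) (l l' : C) :
  is_series a l -> is_series a l' -> l = l'.
Proof.
  intros H1 H2. eapply (@filterlim_locally_unique nat C_AbsRing C_NormedModule eventually _ (sum_n a)); eauto.
Qed.

Lemma fth_odd tau x : fth tau (- x) = - fth tau x.
Proof.
  unfold fth.
  assert (Heq : forall l, is_series (fterm tau (- x)) l <-> is_series (fterm tau x) (- l)).
  { assert (Hoo : forall z : C, - - z = z) by (intros; ring).
    intros l. split; intros H.
    - apply is_series_opp in H. eapply is_series_ext; [|exact H].
      intros n; simpl. rewrite fterm_opp. exact (Hoo _).
    - apply is_series_opp in H. eapply is_series_ext; [|rewrite <- (Hoo l); exact H].
      intros n; simpl. rewrite fterm_opp. reflexivity. }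
  destruct (classic (exists l, is_series (fterm tau x) l)) as [[l Hl]|Hn].
  - rewrite (iota_unique (fun l0 : C => is_series (fterm tau x) l0) l); [| intros y Hy; eapply is_series_C_unique; eauto | exact Hl].
    apply (iota_unique _ (- l)).
    + intros y Hy. apply Heq in Hy. assert (E : (- y : C) = l) by (eapply is_series_C_unique; eauto).
      rewrite <- E. exact (eq_sym (Copp2 y)).
    + apply Heq. rewrite Copp2. exact Hl.
  - rewrite !iota_empty.
    + ring.
    + intros l Hl. apply Hn; eauto.
    + intros l Hl. apply Heq in Hl. apply Hn; eauto.
Qed.

Lemma fodd' tau a b : a = - b -> fth tau a = - fth tau b.
Proof. intros ->. apply fth_odd. Qed.

Definition lprod (l : list nat) (G : nat -> C) : C := fold_right (fun j acc => G j * acc) 1 l.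

Lemma lprod_app1 l a G : lprod (l ++ a :: nil) G = lprod l G * G a.
Proof. induction l; simpl. ring. rewrite IHl. ring. Qed.

Lemma Cprod_lprod n G : Cprod n G = lprod (seq 1 n) G.
Proof. induction n. reflexivity. rewrite seq_S, lprod_app1, <- IHn. simpl. reflexivity. Qed.

Lemma lprod_perm l l' G : Permutation l l' -> lprod l G = lprod l' G.
Proof. induction 1; simpl; auto. rewrite IHPermutation; auto. ring. congruence. Qed.

Lemma lprod_map l s G : lprod (map s l) G = lprod l (fun k => G (s k)).
Proof. induction l; simpl; auto. rewrite IHl; auto. Qed.

Lemma Cprod_perm n s G : perm_1L n s -> Cprod n (fun k => G (s k)) = Cprod n G.
Proof.
  intros [Hr Hi]. rewrite !Cprod_lprod, <- lprod_map. apply lprod_perm.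
  apply Permutation_map_same_l.
  - apply FinFun.Injective_map_NoDup_in; [|apply seq_NoDup].
    intros x y Hx Hy. apply in_seq in Hx. apply in_seq in Hy. apply Hi; lia.
  - intros y Hy. apply in_map_iff in Hy. destruct Hy as [x [<- Hx]]. apply in_seq in Hx.
    apply in_seq. specialize (Hr x ltac:(lia)). lia.
Qed.

Lemma Cprod_ext n F G : (forall j, (1 <= j <= n)%nat -> F j = G j) -> Cprod n F = Cprod n G.
Proof. induction n; intros H; simpl; auto. rewrite IHn. rewrite H. auto. lia. intros; apply H; lia. Qed.

Lemma Cprod_ne_perm n i s F : perm_1L n s -> (1 <= i <= n)%nat ->
  Cprod_ne n i (fun k => F (s k)) = Cprod_ne n (s i) F.
Proof.
  intros Hs Hin. unfold Cprod_ne.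
  rewrite <- (Cprod_perm n s (fun m => if Nat.eqb m (s i) then 1 else F m)) by exact Hs.
  apply Cprod_ext. intros j Hj.
  destruct (Nat.eqb j i) eqn:E1; destruct (Nat.eqb (s j) (s i)) eqn:E2; auto.
  - apply Nat.eqb_eq in E1; subst. rewrite Nat.eqb_refl in E2. discriminate.
  - apply Nat.eqb_eq in E2. apply (proj2 Hs) in E2; try lia. subst. rewrite Nat.eqb_refl in E1; discriminate.
Qed.
Lemma M_perm tau gam th ze L mu lam0 lam i s : perm_1L L s -> (1 <= i <= L)%nat ->
  Mfun tau gam th ze L mu i lam0 (fun k => lam (s k)) = Mfun tau gam th ze L mu (s i) lam0 lam.
Proof.
  intros Hs Hi. pose proof (proj1 Hs i Hi) as Hsi.
  destruct i as [|i']; [lia|]. destruct (s (S i')) as [|m] eqn:Es; [lia|].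
  unfold Mfun. cbv zeta. rewrite Es.
  rewrite (Cprod_ne_perm L (S i') s (fun j => fth tau (lam j - lam (S m) + gam) * fth tau (lam j + lam (S m)) / (fth tau (lam j - lam (S m)) * fth tau (lam j + lam (S m) + gam)))) by auto.
  rewrite (Cprod_ne_perm L (S i') s (fun j => fth tau (lam (S m) - lam j + gam) * fth tau (lam (S m) + lam j + 2 * gam) / (fth tau (lam (S m) - lam j) * fth tau (lam (S m) + lam j + gam)))) by auto.
  rewrite Es. reflexivity.
Qed.

Lemma M0_perm tau gam th ze L mu lam0 lam s : perm_1L L s ->
  Mfun tau gam th ze L mu 0 lam0 (fun k => lam (s k)) = Mfun tau gam th ze L mu 0 lam0 lam.
Proof.
  intros Hs. unfold Mfun. cbv zeta.
  rewrite (Cprod_perm L s (fun j => fth tau (lam j - lam0 + gam) * fth tau (lam j + lam0) / (fth tau (lam j - lam0) * fth tau (lam j + lam0 + gam)))) by auto.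
  reflexivity.
Qed.

Lemma fac1 tau a b g :
  fth tau ((- a - g) - b + g) * fth tau ((- a - g) + b) / (fth tau ((- a - g) - b) * fth tau ((- a - g) + b + g))
  = fth tau (a - b + g) * fth tau (a + b) / (fth tau (a - b) * fth tau (a + b + g)).
Proof.
  rewrite (fodd' tau ((- a - g) - b + g) (a + b)) by ring.
  rewrite (fodd' tau ((- a - g) + b) (a - b + g)) by ring.
  rewrite (fodd' tau ((- a - g) - b) (a + b + g)) by ring.
  rewrite (fodd' tau ((- a - g) + b + g) (a - b)) by ring.
  unfold Cdiv. rewrite !Cinv_mul_gen, !Cinv_opp_gen. ring.
Qed.

Lemma fac2 tau a b g :
  fth tau (b - (- a - g) + g) * fth tau (b + (- a - g) + 2 * g) / (fth tau (b - (- a - g)) * fth tau (b + (- a - g) + g))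
  = fth tau (b - a + g) * fth tau (b + a + 2 * g) / (fth tau (b - a) * fth tau (b + a + g)).
Proof.
  replace (b - (- a - g) + g) with (b + a + 2 * g) by ring.
  replace (b + (- a - g) + 2 * g) with (b - a + g) by ring.
  replace (b - (- a - g)) with (b + a + g) by ring.
  replace (b + (- a - g) + g) with (b - a) by ring.
  unfold Cdiv. rewrite !Cinv_mul_gen. ring.
Qed.

Lemma M0_refl tau gam th ze L mu lam0 lam j :
  Mfun tau gam th ze L mu 0 lam0 (refl_at gam j lam) = Mfun tau gam th ze L mu 0 lam0 lam.
Proof.
  unfold Mfun. cbv zeta. f_equal. f_equal. apply Cprod_ext. intros k Hk.
  unfold refl_at. destruct (Nat.eqb k j); [apply fac1|reflexivity].
Qed.

Lemma Mi_refl_other tau gam th ze L mu lam0 lam i j : (1 <= i)%nat -> j <> i ->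
  Mfun tau gam th ze L mu i lam0 (refl_at gam j lam) = Mfun tau gam th ze L mu i lam0 lam.
Proof.
  intros Hi Hji. destruct i as [|i']; [lia|].
  assert (E : refl_at gam j lam (S i') = lam (S i')).
  { unfold refl_at. destruct (Nat.eqb (S i') j) eqn:E; auto. apply Nat.eqb_eq in E. lia. }
  unfold Mfun. cbv zeta. rewrite E.
  f_equal; f_equal; unfold Cprod_ne; apply Cprod_ext; intros k Hk;
  destruct (Nat.eqb k (S i')); auto; unfold refl_at; destruct (Nat.eqb k j); auto.
  - apply fac1.
  - apply fac2.
Qed.

Lemma Cdiv_oo (a b c d : C) : (- a) * b / ((- c) * d) = a * b / (c * d).
Proof. unfold Cdiv. rewrite !Cinv_mul_gen, !Cinv_opp_gen. ring. Qed.

Lemma fac3 tau x g l :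
  fth tau (l - (- x - g) + g) * fth tau (l + (- x - g)) / (fth tau (l - (- x - g)) * fth tau (l + (- x - g) + g))
  = fth tau (x - l + g) * fth tau (x + l + 2 * g) / (fth tau (x - l) * fth tau (x + l + g)).
Proof.
  replace (l - (- x - g) + g) with (x + l + 2 * g) by ring.
  rewrite (fodd' tau (l + (- x - g)) (x - l + g)) by ring.
  replace (l - (- x - g)) with (x + l + g) by ring.
  rewrite (fodd' tau (l + (- x - g) + g) (x - l)) by ring.
  unfold Cdiv. rewrite !Cinv_mul_gen, !Cinv_opp_gen. ring.
Qed.

Lemma fac4 tau x g l :
  fth tau (- x - g - l + g) * fth tau (- x - g + l + 2 * g) / (fth tau (- x - g - l) * fth tau (- x - g + l + g))
  = fth tau (l - x + g) * fth tau (l + x) / (fth tau (l - x) * fth tau (l + x + g)).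
Proof.
  rewrite (fodd' tau (- x - g - l + g) (l + x)) by ring.
  replace (- x - g + l + 2 * g) with (l - x + g) by ring.
  rewrite (fodd' tau (- x - g - l) (l + x + g)) by ring.
  replace (- x - g + l + g) with (l - x) by ring.
  unfold Cdiv. rewrite !Cinv_mul_gen, !Cinv_opp_gen. ring.
Qed.

Lemma fac5 tau x g m :
  fth tau (- x - g - m + g) * fth tau (- x - g + m + g) = fth tau (x - m) * fth tau (x + m).
Proof.
  rewrite (fodd' tau (- x - g - m + g) (x + m)) by ring.
  rewrite (fodd' tau (- x - g + m + g) (x - m)) by ring. ring.
Qed.

Lemma fac6 tau x g m :
  fth tau (- x - g - m) * fth tau (- x - g + m) = fth tau (x - m + g) * fth tau (x + m + g).
Proof.
  rewrite (fodd' tau (- x - g - m) (x + m + g)) by ring.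
  rewrite (fodd' tau (- x - g + m) (x - m + g)) by ring. ring.
Qed.

Lemma Mi_refl_self tau gam th ze L mu lam0 lam i : (1 <= i <= L)%nat ->
  generic tau gam th ze L lam0 lam ->
  Mfun tau gam th ze L mu i lam0 (refl_at gam i lam)
     = - (fth tau (2 * lam i + 2 * gam) * fth tau (th + ze + lam i))
         / (fth tau (2 * lam i) * fth tau (th + ze - lam i - gam))
         * Mfun tau gam th ze L mu i lam0 lam.
Proof.
  intros Hi Hg. destruct i as [|i']; [lia|].
  assert (E : refl_at gam (S i') lam (S i') = - lam (S i') - gam).
  { unfold refl_at. rewrite Nat.eqb_refl. auto. }
  destruct Hg as [G1 [G2 [G3 [G4 G5]]]].
  destruct (G4 (S i') ltac:(lia)) as [N1 [N2 [N3 N4]]]. simpl in N1, N2, N3, N4.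
  destruct (G5 (S i') 0%nat ltac:(lia) ltac:(lia) ltac:(lia)) as [N5 N6]. simpl in N5, N6.
  clear G4 G5.
  unfold Mfun. cbv zeta. rewrite E.
  unfold LamA, LamDt. cbv zeta.
  set (x := lam (S i')) in *.
  assert (HP1 : Cprod_ne L (S i') (fun j =>  fth tau (refl_at gam (S i') lam j - (- x - gam) + gam) *  fth tau (refl_at gam (S i') lam j + (- x - gam))
      / (fth tau (refl_at gam (S i') lam j - (- x - gam)) *  fth tau (refl_at gam (S i') lam j + (- x - gam) + gam)))
     = Cprod_ne L (S i') (fun j =>  fth tau (x - lam j + gam) *  fth tau (x + lam j + 2 * gam) / (fth tau (x - lam j) *  fth tau (x + lam j + gam)))).
  { unfold Cprod_ne; apply Cprod_ext; intros k _; destruct (Nat.eqb k (S i')) eqn:Ek; auto.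
    unfold refl_at; rewrite Ek. apply fac3. }
  assert (HP2 : Cprod_ne L (S i') (fun j =>  fth tau (- x - gam - refl_at gam (S i') lam j + gam) *  fth tau (- x - gam + refl_at gam (S i') lam j + 2 * gam)
      / (fth tau (- x - gam - refl_at gam (S i') lam j) *  fth tau (- x - gam + refl_at gam (S i') lam j + gam)))
     = Cprod_ne L (S i') (fun j =>  fth tau (lam j - x + gam) *  fth tau (lam j + x) / (fth tau (lam j - x) *  fth tau (lam j + x + gam)))).
  { unfold Cprod_ne; apply Cprod_ext; intros k _; destruct (Nat.eqb k (S i')) eqn:Ek; auto.
    unfold refl_at; rewrite Ek. apply fac4. }
  assert (HQ1 : Cprod L (fun j =>  fth tau (- x - gam - mu j + gam) *  fth tau (- x - gam + mu j + gam))
     = Cprod L (fun j =>  fth tau (x - mu j) *  fth tau (x + mu j))).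
  { apply Cprod_ext; intros k _. apply fac5. }
  assert (HQ2 : Cprod L (fun j =>  fth tau (- x - gam - mu j) *  fth tau (- x - gam + mu j))
     = Cprod L (fun j =>  fth tau (x - mu j + gam) *  fth tau (x + mu j + gam))).
  { apply Cprod_ext; intros k _. apply fac6. }
  rewrite HP1, HP2, HQ1, HQ2. clear HP1 HP2 HQ1 HQ2.
  set (P1 := Cprod_ne L (S i') _).
  set (P2 := Cprod_ne L (S i') _).
  set (QD := Cprod L (fun j =>  fth tau (x - mu j) *  fth tau (x + mu j))).
  set (QA := Cprod L _).
  replace (th + (INR L - 1) * gam + (- x - gam) - lam0) with (th + (INR L - 2) * gam - x - lam0) by ring.
  replace (th + (INR L - 2) * gam - (- x - gam) - lam0) with (th + (INR L - 1) * gam + x - lam0) by ring.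
  rewrite (fodd' tau (2 * (- x - gam) + gam) (2 * x + gam)) by ring.
  rewrite (fodd' tau (2 * (- x - gam)) (2 * x + 2 * gam)) by ring.
  rewrite (fodd' tau (- x - gam - lam0) (x + lam0 + gam)) by ring.
  replace (ze + (- x - gam)) with (ze - x - gam) by ring.
  replace (th + ze - (- x - gam)) with (th + ze + x + gam) by ring.
  replace (th + ze + (- x - gam) + gam) with (th + ze - x) by ring.
  replace (th + ze + (- x - gam)) with (th + ze - x - gam) by ring.
  rewrite (fodd' tau (- x - gam + lam0 + gam) (x - lam0)) by ring.
  replace (ze - (- x - gam) - gam) with (ze + x) by ring.
  field. repeat split; auto.
Qed.

Definition tswap (i j k : nat) : nat := if Nat.eqb k i then j else if Nat.eqb k j then i else k.

Lemma tswap_perm L i j : (1 <= i <= L)%nat -> (1 <= j <= L)%nat -> perm_1L L (tswap i j).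
Proof.
  intros Hi Hj. unfold perm_1L, tswap. split.
  - intros k Hk. destruct (Nat.eqb_spec k i); [lia|]. destruct (Nat.eqb_spec k j); lia.
  - intros a b Ha Hb.
    destruct (Nat.eqb_spec a i); destruct (Nat.eqb_spec a j);
    destruct (Nat.eqb_spec b i); destruct (Nat.eqb_spec b j); lia.
Qed.

Theorem lemma3p4 (tau gam th ze : C) (L : nat) (mu : nat -> C)
    (lam0 : C) (lam : nat -> C) :
  (1 <= L)%nat ->
  (0 < Im tau)%R ->
  generic tau gam th ze L lam0 lam ->
  let M := Mfun tau gam th ze L mu in
  (* (1) *)
  ((forall sigma, perm_1L L sigma ->
      M 0%nat lam0 (fun k => lam (sigma k)) = M 0%nat lam0 lam) /\
   (forall j, (1 <= j <= L)%nat ->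
      M 0%nat lam0 (refl_at gam j lam) = M 0%nat lam0 lam)) /\
  (* (2) *)
  (forall i, (1 <= i <= L)%nat ->
     (forall sigma, perm_1L L sigma -> sigma i = i ->
        M i lam0 (fun k => lam (sigma k)) = M i lam0 lam) /\
     (forall j, (1 <= j <= L)%nat -> j <> i ->
        M i lam0 (refl_at gam j lam) = M i lam0 lam)) /\
  (* (3) *)
  (forall i j, (1 <= i <= L)%nat -> (1 <= j <= L)%nat ->
     M i lam0 (swap_at i j lam) = M j lam0 lam) /\
  (forall i, (1 <= i <= L)%nat ->
     M i lam0 (refl_at gam i lam)
     = - (fth tau (2 * lam i + 2 * gam) * fth tau (th + ze + lam i))
         / (fth tau (2 * lam i) * fth tau (th + ze - lam i - gam))
         * M i lam0 lam).
Proof.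
  intros HL Him Hg M. unfold M. clear M.
  split; [split|split; [|split]].
  - intros s Hs. apply M0_perm; auto.
  - intros j Hj. apply M0_refl.
  - intros i Hi. split.
    + intros s Hs Hsi. rewrite M_perm by auto. rewrite Hsi. reflexivity.
    + intros j Hj Hji. apply Mi_refl_other; auto; lia.
  - intros i j Hi Hj.
    assert (Es : swap_at i j lam = fun k => lam (tswap i j k)).
    { apply functional_extensionality. intros k. unfold swap_at, tswap.
      destruct (Nat.eqb k i); auto. destruct (Nat.eqb k j); auto. }
    rewrite Es, M_perm by (auto using tswap_perm).
    unfold tswap. rewrite Nat.eqb_refl. reflexivity.
  - intros i Hi. apply Mi_refl_self; auto.
Qed.
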